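(* Let $\Sigma\subseteq\mathcal L_\Diamond$ be finite and closed under subformulas and let $\mathcal I$ be a finite weak $\Sigma$-quasimodel such that for every deterministic weak $\mathcal L_\Diamond$-quasimodel $\mathcal A$ the relation $\rightharpoonup\ \subseteq|\mathcal I|\times|\mathcal A|$ is a surjective dynamic simulation. Let $P=\{w\in|\mathcal I|:\not\vdash\mathrm{Sim}(w)\}$. Then the restriction $\mathcal I\upharpoonright P=(P,\preccurlyeq_{\mathcal I}\cap(P\times P),S_{\mathcal I}\cap(P\times P),\ell_{\mathcal I}\upharpoonright P)$ is a (finite) $\Sigma$-quasimodel.
   Context: $\mathcal L_\Diamond$ is the propositional language with $\bot,\wedge,\vee,\to$ and unary modalities $\bigcirc$, $\Diamond$. ${\sf ITL}^0_\Diamond$ is axiomatized by all intuitionistic propositional tautologies, $\neg\bigcirc\bot$, $\bigcirc\varphi\wedge\bigcirc\psi\to\bigcirc(\varphi\wedge\psi)$, $\bigcirc(\varphi\vee\psi)\to\bigcirc\varphi\vee\bigcirc\psi$, $\bigcirc(\varphi\to\psi)\to(\bigcirc\varphi\to\bigcirc\psi)$, $\varphi\vee\bigcirc\Diamond\varphi\to\Diamond\varphi$, closed under modus ponens and the rules $\varphi/\bigcirc\varphi$, $(\varphi\to\psi)/(\Diamond\varphi\to\Diamond\psi)$, $(\bigcirc\varphi\to\varphi)/(\Diamond\varphi\to\varphi)$; $\vdash\varphi$ means $\varphi\in{\sf ITL}^0_\Diamond$. Types: a $\Sigma$-type is a pair $\Phi=(\Phi^-;\Phi^+)$ of subsets of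 $\Sigma$ with $\Phi^-\cap\Phi^+=\varnothing$, $\Phi^-\cup\Phi^+=\Sigma$, $\bot\notin\Phi^+$, $\wedge,\vee$ in $\Phi^+$ behaving classically, ($\varphi\to\psi\in\Phi^+\Rightarrow\varphi\in\Phi^-$ or $\psi\in\Phi^+$), ($\Diamond\varphi\in\Phi^-\Rightarrow\varphi\in\Phi^-$). $\Phi\preccurlyeq_T\Psi$ iff $\Phi^+\subseteq\Psi^+$; $\Phi\subseteq_T\Psi$ iff $\Phi^-\subseteq\Psi^-$, $\Phi^+\subseteq\Psi^+$. $\Phi\,S_T\,\Psi$ iff: $\bigcirc\varphi\in\Phi^+\Rightarrow\varphi\in\Psi^+$; $\bigcirc\varphi\in\Phi^-\Rightarrow\varphi\in\Psi^-$; ($\Diamond\varphi\in\Phi^+$, $\varphi\in\Phi^-$)$\Rightarrow\Diamond\varphi\in\Psi^+$; $\Diamond\varphi\in\Phi^-\Rightarrow\Diamond\varphi\in\Psi^-$. A $\Sigma$-labelled frame is $(W,\preccurlyeq,\ell)$, $\preccurlyeq$ a partial order, $\ell$ mapping to $\Sigma$-types, monotone w.r.t. $\preccurlyeq_T$, and if $\varphi\to\psi\in\ell^-(w)$ then some $v\succcurlyeq w$ has $\varphi\in\ell^+(v)$, $\psi\in\ell^-(v)$. A weak $\Sigma$-quasimodel adds $S\subseteq W\times W$ forward-confluent (if $w\preccurlyeq w'$, $w\,S\,v$ then some $v'\succcurlyeq v$ has $w'\,S\,v'$) and sensible ($w\,S\,v\Rightarrow\ell(w)\,S_T\,\ell(v)$);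 deterministic if $S$ is a function. A $\Sigma$-quasimodel is a weak $\Sigma$-quasimodel whose $S$ is also serial and $\omega$-sensible (if $\Diamond\varphi\in\ell^+(w)$ there are $n\ge0$ and $v$ with $w\,S^n\,v$ and $\varphi\in\ell^+(v)$). A simulation from a $\Sigma$-labelled $\mathcal X$ to a $\Delta$-labelled $\mathcal Y$ ($\Sigma\subseteq\Delta$) is a forward-confluent $E\subseteq|\mathcal X|\times|\mathcal Y|$ with $x\,E\,y\Rightarrow\ell(x)\subseteq_T\ell(y)$; $x\rightharpoonup y$ iff some simulation relates them; $E$ is dynamic if $x\,E\,y$ and $y\,S\,y'$ imply some $x'$ with $x\,S\,x'$, $x'\,E\,y'$; surjective if every point of $\mathcal A$ is in its range. $\mathrm{Sim}(w)=\bigwedge\ell^+(w)\to\big(\bigvee\ell^-(w)\vee\bigvee_{v\succ w}\mathrm{Sim}(v)\big)$, defined by backwards induction on $\prec$ ($\bigwedge\varnothing=\top$, $\bigvee\varnothing=\bot$). *)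

(* Defs.v *)
From HB Require Import structures.
From mathcomp Require Import all_boot.
Set Implicit Arguments. Unset Strict Implicit. Unset Printing Implicit Defensive.

Inductive form : Type :=
| Var  : nat -> form
| Bot  : form
| And  : form -> form -> form
| Or   : form -> form -> form
| Imp  : form -> form -> form
| Next : form -> form
| Dia  : form -> form.

Definition Neg (f : form) : form := Imp f Bot.
Definition Top : form := Imp Bot Bot.

Definition form_eq_dec : forall x y : form, {x = y} + {x <> y}.
Proof. decide equality; decide equality. Defined.

HB.instance Definition _ := comparableMixin form_eq_dec.

Definition children (f : form) : seq form :=
  match f with
  | Var _ | Bot => [::]
  | And a b | Or a b | Imp a b => [:: a; b]
  | Next a | Dia a => [:: a]
  end.

(* closure under subformulas (equivalently, under immediate subformulas) *)
Definition subformula_closed (Sig : seq form) : Prop :=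
  forall f, f \in Sig -> forall g, g \in children f -> g \in Sig.

(* Intuitionistic propositional tautologies (all substitution instances, in
   the full language) are generated by a standard complete Hilbert
   axiomatisation of IPC (schemes + modus ponens). *)
Inductive prov : form -> Prop :=
| ax_K     a b   : prov (Imp a (Imp b a))
| ax_S     a b c : prov (Imp (Imp a (Imp b c)) (Imp (Imp a b) (Imp a c)))
| ax_andE1 a b   : prov (Imp (And a b) a)
| ax_andE2 a b   : prov (Imp (And a b) b)
| ax_andI  a b   : prov (Imp a (Imp b (And a b)))
| ax_orI1  a b   : prov (Imp a (Or a b))
| ax_orI2  a b   : prov (Imp b (Or a b))
| ax_orE   a b c : prov (Imp (Imp a c) (Imp (Imp b c) (Imp (Or a b) c)))
| ax_efq   a     : prov (Imp Bot a)
| ax_nextBot     : prov (Neg (Next Bot))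
| ax_nextAnd a b : prov (Imp (And (Next a) (Next b)) (Next (And a b)))
| ax_nextOr  a b : prov (Imp (Next (Or a b)) (Or (Next a) (Next b)))
| ax_nextK   a b : prov (Imp (Next (Imp a b)) (Imp (Next a) (Next b)))
| ax_diaFix  a   : prov (Imp (Or a (Next (Dia a))) (Dia a))
| r_mp   a b : prov (Imp a b) -> prov a -> prov b
| r_nec  a   : prov a -> prov (Next a)
| r_diaMon a b : prov (Imp a b) -> prov (Imp (Dia a) (Dia b))
| r_diaInd a : prov (Imp (Next a) a) -> prov (Imp (Dia a) a).

Record ty := Ty { tminus : pred form; tplus : pred form }.

(* Sig : the (possibly infinite) set of formulas the types range over *)
Definition is_type (Sig : pred form) (T : ty) : Prop :=
  (forall f, ~ (tminus T f /\ tplus T f)) /\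
      (forall f, Sig f <-> (tminus T f \/ tplus T f)) /\
      ~ tplus T Bot /\
      (forall a b, Sig (And a b) -> (tplus T (And a b) <-> (tplus T a /\ tplus T b))) /\
      (forall a b, Sig (Or a b) -> (tplus T (Or a b) <-> (tplus T a \/ tplus T b))) /\
      (forall a b, tplus T (Imp a b) -> tminus T a \/ tplus T b)  /\
      (forall a, tminus T (Dia a) -> tminus T a).

Definition ty_le (T U : ty) : Prop := forall f, tplus T f -> tplus U f.

Definition ty_sub (T U : ty) : Prop :=
  (forall f, tminus T f -> tminus U f) /\ (forall f, tplus T f -> tplus U f).

Definition ty_S (T U : ty) : Prop :=
  [/\ (forall a, tplus T (Next a) -> tplus U a),
      (forall a, tminus T (Next a) -> tminus U a),
      (forall a, tplus T (Dia a) -> tminus T a -> tplus U (Dia a))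
    & (forall a, tminus T (Dia a) -> tminus U (Dia a))].

Definition partial_order (W : Type) (le : W -> W -> Prop) : Prop :=
  [/\ (forall w, le w w),
      (forall u v w, le u v -> le v w -> le u w)
    & (forall u v, le u v -> le v u -> u = v)].

Definition labelled_frame (Sig : pred form) (W : Type)
    (le : W -> W -> Prop) (l : W -> ty) : Prop :=
  [/\ partial_order le,
      (forall w, is_type Sig (l w)),
      (forall w v, le w v -> ty_le (l w) (l v))
    & (forall w a b, tminus (l w) (Imp a b) ->
         exists v, le w v /\ tplus (l v) a /\ tminus (l v) b)].

Definition forward_confluent (W : Type) (le S : W -> W -> Prop) : Prop :=
  forall w w' v, le w w' -> S w v -> exists v', le v v' /\ S w' v'.

Definition sensible (W : Type) (S : W -> W -> Prop) (l : W -> ty) : Prop :=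
  forall w v, S w v -> ty_S (l w) (l v).

Definition weak_quasimodel (Sig : pred form) (W : Type)
    (le S : W -> W -> Prop) (l : W -> ty) : Prop :=
  [/\ labelled_frame Sig le l, forward_confluent le S & sensible S l].

Definition deterministic (W : Type) (S : W -> W -> Prop) : Prop :=
  forall w, exists! v, S w v.

Definition serial (W : Type) (S : W -> W -> Prop) : Prop :=
  forall w, exists v, S w v.

Fixpoint iterS (W : Type) (S : W -> W -> Prop) (n : nat) (w v : W) : Prop :=
  match n with
  | 0 => w = v
  | n'.+1 => exists u, S w u /\ iterS S n' u v
  end.

Definition omega_sensible (W : Type) (S : W -> W -> Prop) (l : W -> ty) : Prop :=
  forall w a, tplus (l w) (Dia a) ->
    exists n v, iterS S n w v /\ tplus (l v) a.

Definition quasimodel (Sig : pred form) (W : Type)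
    (le S : W -> W -> Prop) (l : W -> ty) : Prop :=
  [/\ weak_quasimodel Sig le S l, serial S & omega_sensible S l].

Definition simulation (X Y : Type) (leX : X -> X -> Prop) (lX : X -> ty)
    (leY : Y -> Y -> Prop) (lY : Y -> ty) (E : X -> Y -> Prop) : Prop :=
  (forall x y, E x y -> ty_sub (lX x) (lY y)) /\
  (forall x x' y, E x y -> leX x x' -> exists y', leY y y' /\ E x' y').

Definition simulates (X Y : Type) (leX : X -> X -> Prop) (lX : X -> ty)
    (leY : Y -> Y -> Prop) (lY : Y -> ty) (x : X) (y : Y) : Prop :=
  exists E, simulation leX lX leY lY E /\ E x y.

Definition dynamic (X Y : Type) (SX : X -> X -> Prop) (SY : Y -> Y -> Prop)
    (E : X -> Y -> Prop) : Prop :=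
  forall x y y', E x y -> SY y y' -> exists x', SX x x' /\ E x' y'.

Definition surjective_rel (X Y : Type) (E : X -> Y -> Prop) : Prop :=
  forall y, exists x, E x y.

Fixpoint bigAnd (s : seq form) : form :=
  match s with
  | [::] => Top
  | [:: a] => a
  | a :: s' => And a (bigAnd s')
  end.

Fixpoint bigOr (s : seq form) : form :=
  match s with
  | [::] => Bot
  | [:: a] => a
  | a :: s' => Or a (bigOr s')
  end.

(* Sim with fuel; the fuel #|W| always suffices (strict chains in a finite
   partial order have fewer than #|W| steps), so the base case is never reached
   and sim_formula below is literally the backward-inductive definition. *)
Fixpoint simf (Sig : seq form) (W : finType) (le : rel W) (l : W -> ty)
    (n : nat) (w : W) : form :=
  match n with
  | 0 => Bot
  | n'.+1 =>
      Imp (bigAnd [seq f <- Sig | tplus (l w) f])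
          (Or (bigOr [seq f <- Sig | tminus (l w) f])
              (bigOr [seq simf Sig le l n' v | v <- enum [pred v | (v != w) && le w v]]))
  end.

Definition sim_formula (Sig : seq form) (W : finType) (le : rel W) (l : W -> ty)
    (w : W) : form := simf Sig le l #|W| w.

(* Main.v *)
Require Import Defs.
From HB Require Import structures.
From mathcomp Require Import all_boot.
From Stdlib Require Import Classical ClassicalEpsilon FunctionalExtensionality ProofIrrelevance.
Set Implicit Arguments. Unset Strict Implicit. Unset Printing Implicit Defensive.

Fixpoint enc (f : form) : GenTree.tree nat :=
  match f with
  | Var n => GenTree.Leaf n
  | Bot => GenTree.Node 0 [::]
  | And a b => GenTree.Node 1 [:: enc a; enc b]
  | Or a b => GenTree.Node 2 [:: enc a; enc b]
  | Imp a b => GenTree.Node 3 [:: enc a; enc b]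
  | Next a => GenTree.Node 4 [:: enc a]
  | Dia a => GenTree.Node 5 [:: enc a]
  end.

Fixpoint dec (t : GenTree.tree nat) : option form :=
  match t with
  | GenTree.Leaf n => Some (Var n)
  | GenTree.Node 0 [::] => Some Bot
  | GenTree.Node 1 [:: a; b] => match dec a, dec b with Some x, Some y => Some (And x y) | _, _ => None end
  | GenTree.Node 2 [:: a; b] => match dec a, dec b with Some x, Some y => Some (Or x y) | _, _ => None end
  | GenTree.Node 3 [:: a; b] => match dec a, dec b with Some x, Some y => Some (Imp x y) | _, _ => None end
  | GenTree.Node 4 [:: a] => match dec a with Some x => Some (Next x) | _ => None end
  | GenTree.Node 5 [:: a] => match dec a with Some x => Some (Dia x) | _ => None end
  | _ => None
  end.

Lemma encK : pcancel enc dec.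
Proof. elim=> //= [a -> b ->|a -> b ->|a -> b ->|a ->|a ->] //. Qed.

Definition enumf (n : nat) : form := odflt Bot (obind dec (unpickle n)).
Lemma enumfK f : enumf (pickle (enc f)) = f.
Proof. by rewrite /enumf pickleK /= encK. Qed.

Definition asb (P : Prop) : bool := if excluded_middle_informative P then true else false.
Lemma asbP (P : Prop) : asb P = true <-> P.
Proof. rewrite /asb; case: excluded_middle_informative => //. Qed.

Inductive derH (G : form -> Prop) : form -> Prop :=
| dH_hyp f : G f -> derH G f
| dH_thm f : prov f -> derH G f
| dH_mp a b : derH G (Imp a b) -> derH G a -> derH G b.

Lemma prov_I a : prov (Imp a a).
Proof.
apply: (r_mp (r_mp (ax_S a (Imp a a) a) (ax_K a (Imp a a)))). exact: ax_K.
Qed.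

Lemma derH_mono (G G' : form -> Prop) f : (forall x, G x -> G' x) -> derH G f -> derH G' f.
Proof. move=> H; elim=> [x /H|x|a b _ IH1 _ IH2]; [exact: dH_hyp|exact: dH_thm|exact: dH_mp IH1 IH2]. Qed.

Lemma deduction (G : form -> Prop) a b : derH (fun x => G x \/ x = a) b -> derH G (Imp a b).
Proof.
elim=> [x [Gx| ->]|x px|x y _ IH1 _ IH2].
- exact: dH_mp (dH_thm _ (ax_K x a)) (dH_hyp Gx).
- exact: dH_thm (prov_I a).
- exact: dH_mp (dH_thm _ (ax_K x a)) (dH_thm _ px).
- exact: dH_mp (dH_mp (dH_thm _ (ax_S a x y)) IH1) IH2.
Qed.

Lemma derH0 f : derH (fun _ => False) f -> prov f.
Proof. elim=> // a b _ H1 _ H2; exact: r_mp H1 H2. Qed.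

Section Lind.
Variables (G : form -> Prop) (phi : form).

Fixpoint Lch (n : nat) : form -> Prop :=
  match n with
  | 0 => G
  | n'.+1 => fun x => Lch n' x \/ (x = enumf n' /\ ~ derH (fun y => Lch n' y \/ y = enumf n') phi)
  end.

Definition Lim x := exists n, Lch n x.

Lemma Lch_mono m n x : m <= n -> Lch m x -> Lch n x.
Proof.
move=> /subnK <-; elim: (n - m) => // k IH /IH; rewrite addSn /=; by left.
Qed.

Lemma Lim_compact f : derH Lim f -> exists n, derH (Lch n) f.
Proof.
elim=> [x [n Hn]|x px|a b _ [n1 H1] _ [n2 H2]].
- by exists n; apply: dH_hyp.
- by exists 0; apply: dH_thm.
- exists (maxn n1 n2); apply: dH_mp.
  + apply: derH_mono H1 => x; apply: Lch_mono; exact: leq_maxl.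
  + apply: derH_mono H2 => x; apply: Lch_mono; exact: leq_maxr.
Qed.

Hypothesis nG : ~ derH G phi.

Lemma Lch_cons n : ~ derH (Lch n) phi.
Proof.
elim: n => //= n IH; case: (classic (derH (fun y => Lch n y \/ y = enumf n) phi)) => Hc.
- apply: contra_not IH; apply: derH_mono => x [//|[_ ?]]; by [].
- apply: contra_not Hc; apply: derH_mono => x [?|[-> _]]; by [left|right].
Qed.

Lemma Lim_cons : ~ derH Lim phi.
Proof. by move/Lim_compact=> [n]; apply: Lch_cons. Qed.

Lemma Lim_in_or_der x : Lim x \/ derH Lim (Imp x phi).
Proof.
set n := pickle (enc x).
case: (classic (derH (fun y => Lch n y \/ y = enumf n) phi)) => Hc.
- right; apply: deduction; move: Hc; rewrite /n enumfK; apply: derH_mono => y [Hy|->]; last by right.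
  by left; exists (pickle (enc x)).
- left; exists n.+1; simpl; right; split; [by rewrite /n enumfK | exact: Hc].
Qed.

Lemma Lim_closed f : derH Lim f -> Lim f.
Proof.
move=> Hf; case: (Lim_in_or_der f) => // H; exfalso; apply: Lim_cons; exact: dH_mp H Hf.
Qed.

Lemma Lim_prime a b : Lim (Or a b) -> Lim a \/ Lim b.
Proof.
move=> Hab; case: (Lim_in_or_der a) => [|Ha]; first by left.
case: (Lim_in_or_der b) => [|Hb]; first by right.
exfalso; apply: Lim_cons.
exact: dH_mp (dH_mp (dH_mp (dH_thm _ (ax_orE a b phi)) Ha) Hb) (dH_hyp Hab).
Qed.

Lemma Lim_G x : G x -> Lim x.
Proof. by exists 0. Qed.
End Lind.

Definition pth (t : form -> bool) : Prop :=
  [/\ (forall f, derH (fun x => t x) f -> t f), ~~ t Bot & (forall a b, t (Or a b) -> t a \/ t b)].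

Lemma lindenbaum (G : form -> Prop) phi : ~ derH G phi ->
  exists t, [/\ pth t, (forall x, G x -> t x) & ~~ t phi].
Proof.
move=> nG; exists (fun x => asb (Lim G phi x)); split.
- split.
  + move=> f Hf; apply/asbP; apply: Lim_closed => //; apply: derH_mono Hf => x /asbP //.
  + apply/negP => /asbP HB; apply: (Lim_cons nG); exact: dH_mp (dH_thm _ (ax_efq phi)) (dH_hyp HB).
  + by move=> a b /asbP /Lim_prime [] // H; [left|right]; apply/asbP.
- by move=> x Gx; apply/asbP; apply: Lim_G.
- apply/negP => /asbP H; apply: (Lim_cons nG); exact: dH_hyp.
Qed.

Section PT.
Variable t : form -> bool.
Hypothesis pt : pth t.

Lemma pt_der f : derH (fun x => t x) f -> t f.
Proof. by move: pt; rewrite /pth => -[H _ _]; apply: H. Qed.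
Lemma pt_prov f : prov f -> t f.
Proof. by move=> p; apply: pt_der; apply: dH_thm. Qed.
Lemma pt_mp a b : t (Imp a b) -> t a -> t b.
Proof. by move=> H1 H2; apply: pt_der; apply: dH_mp (dH_hyp H1) (dH_hyp H2). Qed.
Lemma pt_pimp a b : prov (Imp a b) -> t a -> t b.
Proof. by move=> /pt_prov; apply: pt_mp. Qed.
Lemma pt_bot : ~~ t Bot.
Proof. by move: pt; rewrite /pth => -[_ H _]. Qed.
Lemma pt_or a b : t (Or a b) <-> t a \/ t b.
Proof.
split; first by move: pt; rewrite /pth => -[_ _ H]; apply: H.
by case=> H; [apply: pt_pimp (ax_orI1 a b) H|apply: pt_pimp (ax_orI2 a b) H].
Qed.
Lemma pt_and a b : t (And a b) <-> t a /\ t b.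
Proof.
split; first by move=> H; split; [apply: pt_pimp (ax_andE1 a b) H|apply: pt_pimp (ax_andE2 a b) H].
by case=> H1 H2; apply: pt_mp (pt_pimp (ax_andI a b) H1) H2.
Qed.
Lemma pt_top : t Top.
Proof. exact: pt_prov (ax_efq Bot). Qed.

Lemma pt_bigAnd s : t (bigAnd s) <-> (forall x, x \in s -> t x).
Proof.
elim: s => [|a s IH]; first by split=> // _; apply: pt_top.
case: s IH => [|b s] IH.
- by split=> [H x|H]; [rewrite inE => /eqP ->|apply: H; rewrite inE].
- rewrite [bigAnd _]/= pt_and IH; split=> [[Ha Hs] x|H].
  + by rewrite inE => /orP [/eqP ->|/Hs].
  + by split=> [|x Hx]; apply: H; rewrite inE ?eqxx ?Hx ?orbT.
Qed.

Lemma pt_bigOr s : t (bigOr s) <-> (exists2 x, x \in s & t x).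
Proof.
elim: s => [|a s IH]; first by split=> [|[]//]; move=> H; move: pt_bot; rewrite H.
case: s IH => [|b s] IH.
- by split=> [H|[x]]; [exists a; rewrite ?inE|rewrite inE => /eqP ->].
- rewrite [bigOr _]/= pt_or IH; split=> [[Ha|[x Hx Hx']]|[x]].
  + by exists a; rewrite ?inE ?eqxx.
  + by exists x; rewrite // inE Hx orbT.
  + by rewrite inE => /orP [/eqP ->|Hx Htx]; [left|right; exists x].
Qed.
End PT.

Lemma pt_imp_ext t a b : pth t -> ~~ t (Imp a b) ->
  exists t', [/\ pth t', (forall x, t x -> t' x), t' a & ~~ t' b].
Proof.
move=> pt nab.
have nd : ~ derH (fun x => t x \/ x = a) b.
  by move=> /deduction H; move: nab; rewrite (pt_der pt H).
have [t' [pt' Hs Hb]] := lindenbaum nd.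
exists t'; split => //; [by move=> x tx; apply: Hs; left|by apply: Hs; right].
Qed.

Lemma prov_sem f : (forall t, pth t -> t f) -> prov f.
Proof.
move=> H; apply: NNPP => np.
have nd : ~ derH (fun _ => False) f by move/derH0.
have [t [pt _ nf]] := lindenbaum nd.
by move: nf; rewrite H.
Qed.

Lemma prov_imp_sem a b : (forall t, pth t -> t a -> t b) -> prov (Imp a b).
Proof.
move=> H; apply: prov_sem => t pt; apply: NNPP => /negP nab.
have [t' [pt' _ ta nb]] := pt_imp_ext pt nab.
by move: nb; rewrite H.
Qed.

Lemma prov_dia_intro a : prov (Imp a (Dia a)).
Proof. apply: prov_imp_sem => t pt ta; apply: (pt_pimp pt (ax_diaFix a)); apply/(pt_or pt); by left. Qed.

Lemma prov_next_dia a : prov (Imp (Next (Dia a)) (Dia a)).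
Proof. apply: prov_imp_sem => t pt ta; apply: (pt_pimp pt (ax_diaFix a)); apply/(pt_or pt); by right. Qed.

Lemma prov_dia_unfold a : prov (Imp (Dia a) (Or a (Next (Dia a)))).
Proof.
set psi := Or a (Next (Dia a)).
have h1 : prov (Imp (Next psi) psi).
  apply: prov_imp_sem => t pt tn.
  have := pt_pimp pt (ax_nextOr _ _) tn; rewrite pt_or // => -[H|H]; apply/(pt_or pt); right.
  - have X1 := pt_prov pt (r_nec (prov_dia_intro a)). have X2 := pt_pimp pt (ax_nextK _ _) X1. exact (pt_mp pt X2 H).
  - exact (pt_mp pt (pt_pimp pt (ax_nextK _ _) (pt_prov pt (r_nec (prov_next_dia a)))) H).
have h2 := r_diaInd h1.
have h3 : prov (Imp (Dia a) (Dia psi)) by apply: r_diaMon; exact: ax_orI1.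
apply: prov_imp_sem => t pt ta; exact (pt_pimp pt h2 (pt_pimp pt h3 ta)).
Qed.

Definition ct := {t : form -> bool | pth t}.
Definition leC (x y : ct) : Prop := forall f, sval x f -> sval y f.
Definition lC (x : ct) : ty := Ty (fun f => ~~ sval x f) (sval x).

Lemma nxt_pth (t : form -> bool) : pth t -> pth (fun f => t (Next f)).
Proof.
move=> pt; split.
- move=> f; elim=> [x //|x px|a b _ H1 _ H2].
  + exact (pt_prov pt (r_nec px)).
  + exact (pt_mp pt (pt_pimp pt (ax_nextK _ _) H1) H2).
- apply/negP => H; move: (pt_bot pt); rewrite (pt_mp pt (pt_prov pt ax_nextBot) H) //.
- by move=> a b /(pt_pimp pt (ax_nextOr _ _)) /(pt_or pt).
Qed.

Definition nxt (x : ct) : ct := exist _ _ (nxt_pth (svalP x)).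
Definition SC (x y : ct) : Prop := y = nxt x.

Lemma ct_eq (x y : ct) : (forall f, sval x f = sval y f) -> x = y.
Proof.
case: x y => [x px] [y py] /= H.
have E : x = y by apply: functional_extensionality.
subst y; f_equal; apply: proof_irrelevance.
Qed.

Lemma canon_wq : weak_quasimodel (fun _ => true) leC SC lC.
Proof.
split.
- split.
  + split=> [w f //|u v w H1 H2 f /H1 /H2 //|u v H1 H2]; apply: ct_eq => f.
    by apply/idP/idP; [apply: H1|apply: H2].
  + move=> [t pt]; rewrite /is_type /=; split; last split; last split; last split; last split; last split.
    * by move=> f [/negP].
    * by move=> f; split=> // _; case: (t f); [right|left].
    * by apply/negP; apply: pt_bot.
    * by move=> a b _; apply: pt_and.
    * by move=> a b _; apply: pt_or.
    * move=> a b H; case Ha: (t a); [right; exact (pt_mp pt H Ha)|by left].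
    * move=> a; apply: contra; exact (pt_pimp pt (prov_dia_intro a)).
  + by move=> w v H.
  + move=> [t pt] a b /= nab; have [t' [pt' Hs ta nb]] := pt_imp_ext pt nab.
    by exists (exist _ t' pt').
- move=> w w' v H ->; exists (nxt w'); split => //= f; exact: H.
- move=> [t pt] v -> /=; split => //= a.
  + move=> Hd Ha; move: (pt_pimp pt (prov_dia_unfold a) Hd); rewrite pt_or //.
    by case=> // H; move: Ha; rewrite H.
  + apply: contra; exact (pt_pimp pt (prov_next_dia a)).
Qed.

Lemma canon_det : deterministic SC.
Proof. by move=> x; exists (nxt x); split=> // y ->. Qed.

Section Main.
Variables (Sig : seq form) (W : finType) (leI SI : rel W) (lI : W -> ty).
Hypothesis Hsc : subformula_closed Sig.
Hypothesis HI : weak_quasimodel (fun f => f \in Sig) (fun x y => leI x y) (fun x y => SI x y) lI.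

Definition R := simulates (fun x y => leI x y) lI leC lC.
Hypothesis HR : [/\ simulation (fun x y => leI x y) lI leC lC R,
         dynamic (fun x y => SI x y) SC R
       & surjective_rel R].

Lemma I_po : partial_order (fun x y => leI x y).
Proof. by move: HI; rewrite /weak_quasimodel /labelled_frame => -[[]]. Qed.
Lemma I_trans u v w : leI u v -> leI v w -> leI u w.
Proof. by move: I_po => [_ H _]; apply: H. Qed.
Lemma I_anti u v : leI u v -> leI v u -> u = v.
Proof. by move: I_po => [_ _ H]; apply: H. Qed.
Lemma I_ty w : is_type (fun f => f \in Sig) (lI w).
Proof. by move: HI; rewrite /weak_quasimodel /labelled_frame => -[[]]. Qed.
Lemma I_plus_Sig w f : tplus (lI w) f -> f \in Sig.
Proof. by move: (I_ty w) => [_ [H _]] Hf; apply/H; right. Qed.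
Lemma I_minus_Sig w f : tminus (lI w) f -> f \in Sig.
Proof. by move: (I_ty w) => [_ [H _]] Hf; apply/H; left. Qed.

Definition Sim (u : W) := sim_formula Sig leI lI u.
Definition P (u : W) := ~ prov (sim_formula Sig leI lI u).
Definition above (u : W) := [pred v | (v != u) && leI u v].

Lemma card_above_lt u : #|above u| < #|W|.
Proof.
apply: (@leq_trans (#|predC1 u|).+1); last by rewrite cardC1 prednK //; apply/card_gt0P; exists u.
rewrite ltnS; apply: subset_leq_card; apply/subsetP => v; rewrite !inE => /andP [] //.
Qed.

Lemma card_above_dec u v : v != u -> leI u v -> #|above v| < #|above u|.
Proof.
move=> nvu luv; apply: proper_card; apply/properP; split.
- apply/subsetP => x; rewrite !inE => /andP [nxv lvx]; rewrite (I_trans luv lvx) andbT.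
  apply/eqP => exu; subst x; move/eqP: nvu; apply; exact: I_anti.
- by exists v; rewrite !inE ?nvu ?luv ?eqxx.
Qed.

Lemma simf_fuel k k' u : #|above u| < k -> #|above u| < k' ->
  simf Sig leI lI k u = simf Sig leI lI k' u.
Proof.
elim: k k' u => [//|k IH] [//|k'] u Hk Hk' /=; congr Imp; congr Or; congr bigOr.
apply/eq_in_map => v; rewrite mem_enum inE => /andP [nvu luv].
have h := card_above_dec nvu luv; rewrite ltnS in Hk Hk'; apply: IH; [exact: leq_trans h Hk|exact: leq_trans h Hk'].
Qed.

Lemma sim_not E : simulation (fun x y => leI x y) lI leC lC E ->
  forall k u x, E u x -> ~~ sval x (simf Sig leI lI k u).
Proof.
move=> [Hsub Hfc]; elim=> [|k IH] u x Hux; first exact: pt_bot (svalP x).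
have pt := svalP x; have [Hm Hp] := Hsub _ _ Hux.
apply/negP => /= Himp.
have Ha : sval x (bigAnd [seq f <- Sig | tplus (lI u) f]).
  apply/(pt_bigAnd pt) => f; rewrite mem_filter => /andP [Hf _]; exact: Hp.
have := pt_mp pt Himp Ha; rewrite pt_or // => -[/(pt_bigOr pt) [f]|/(pt_bigOr pt) [f]].
- by rewrite mem_filter => /andP [Hf _] Hxf; move: (Hm _ Hf) => /=; rewrite Hxf.
- move=> /mapP [v]; rewrite mem_enum inE => /andP [nvu luv] -> Hxv.
  have [y [lxy Evy]] := Hfc _ _ _ Hux luv.
  by move: (IH _ _ Evy); rewrite (lxy _ Hxv).
Qed.

Lemma R_sim : simulation (fun x y => leI x y) lI leC lC R.
Proof. by case: HR. Qed.

Lemma R_not u x : R u x -> ~~ sval x (Sim u).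
Proof. by move=> [E [HE Eux]]; apply: sim_not HE _ _ _ Eux. Qed.

Lemma R_P u x : R u x -> P u.
Proof. by move=> /R_not H Hp; move: H; rewrite (pt_prov (svalP x) Hp). Qed.

Definition Ep (u : W) (x : ct) : Prop :=
  [/\ (forall f, tplus (lI u) f -> sval x f), (forall f, tminus (lI u) f -> ~~ sval x f)
    & (forall v, v != u -> leI u v -> ~~ sval x (Sim v))].

Lemma step u x : ~~ sval x (Sim u) -> exists y, leC x y /\ Ep u y.
Proof.
have pt := svalP x.
have HW : #|W| = (#|W|.-1).+1 by rewrite prednK //; apply/card_gt0P; exists u.
rewrite /Sim /sim_formula {1}HW /= => Hn.
have [t' [pt' Hs Ha No]] := pt_imp_ext pt Hn.
exists (exist _ t' pt'); split => //; split => /=.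
- move=> f Hf; move/(pt_bigAnd pt'): Ha; apply; rewrite mem_filter Hf.
  exact: I_plus_Sig Hf.
- move=> f Hf; apply/negP => Htf; apply: (negP No); apply/(pt_or pt'); left.
  apply/(pt_bigOr pt'); exists f => //; rewrite mem_filter Hf; exact: I_minus_Sig Hf.
- move=> v nvu luv; apply/negP => Htf; apply: (negP No); apply/(pt_or pt'); right.
  apply/(pt_bigOr pt'); exists (simf Sig leI lI (#|W|.-1) v).
  + by apply/mapP; exists v; rewrite // mem_enum inE nvu luv.
  + rewrite (@simf_fuel _ #|W| v) //; last exact: card_above_lt.
    have := card_above_dec nvu luv; have := card_above_lt u; rewrite HW ltnS.
    by move=> h1 h2; exact: leq_trans h2 h1.
Qed.

Lemma Ep_sim : simulation (fun x y => leI x y) lI leC lC Ep.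
Proof.
split.
- by move=> u x [Hp Hm _]; split => f /=; [apply: Hm|apply: Hp].
- move=> u u' x [Hp Hm Hv] luu'; case: (eqVneq u' u) => [->|nuu'].
  + by exists x; split => // [f]; split.
  + by apply: step; apply: Hv.
Qed.

Lemma P_R u : P u -> exists x, R u x.
Proof.
move=> Pu.
have nd : ~ derH (fun _ => False) (Sim u) by move/derH0.
have [t [pt _ nf]] := lindenbaum nd.
have [y [_ Ey]] := @step u (exist _ t pt) nf.
by exists y; exists Ep; split => //; apply: Ep_sim.
Qed.

Lemma P_up u v : P u -> leI u v -> P v.
Proof.
move=> /P_R [x Rux] luv; case: R_sim => _ Hfc.
by have [y [_ Rvy]] := Hfc _ _ _ Rux luv; apply: R_P Rvy.
Qed.

Lemma R_dyn : dynamic (fun x y => SI x y) SC R.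
Proof. by case: HR. Qed.

Definition WP := {w : W | P w}.
Definition SP (x y : WP) : Prop := SI (sval x) (sval y).

Lemma WP_serial : serial SP.
Proof.
move=> [w pw]; have [x Rwx] := P_R pw.
have [u' [Su Ru]] := R_dyn Rwx (erefl (nxt x)).
by exists (exist _ u' (R_P Ru)).
Qed.

Fixpoint iterP (n : nat) (u v : W) : Prop :=
  match n with
  | 0 => u = v /\ P u
  | n'.+1 => P u /\ exists u', SI u u' /\ iterP n' u' v
  end.

Lemma iterP_P n u v : iterP n u v -> P u.
Proof. by case: n => [[_ H]|n [H _]]. Qed.

Lemma iterP_sub n u v (pu : P u) : iterP n u v ->
  exists pv : P v, Defs.iterS SP n (exist _ u pu) (exist _ v pv).
Proof.
elim: n u pu => [|n IH] u pu /=.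
- by move=> [E _]; subst v; exists pu.
- move=> [_ [u' [Su Hit]]].
  have pu' := iterP_P Hit.
  have [pv Hv] := IH _ pu' Hit.
  by exists pv; exists (exist _ u' pu').
Qed.

Lemma WP_omega : omega_sensible SP (fun x : WP => lI (sval x)).
Proof.
move=> [w pw] a /= Hd.
have aSig : a \in Sig by apply: (Hsc (I_plus_Sig Hd)); rewrite /= inE.
pose N u := forall n v, iterP n u v -> tminus (lI v) a.
pose chi := bigAnd [seq Sim u | u <- enum [pred u | asb (N u)]].
have chiP : forall t, pth t -> (t chi <-> forall u, N u -> t (Sim u)).
  move=> t pt; rewrite /chi (pt_bigAnd pt); split=> H.
  - by move=> u Nu; apply: H; apply/mapP; exists u; rewrite // mem_enum inE; apply/asbP.
  - by move=> f /mapP [u]; rewrite mem_enum inE => /asbP Nu ->; apply: H.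
have hA : prov (Imp a chi).
  apply: prov_imp_sem => t pt ta; apply/(chiP t pt) => u Nu.
  case Ht: (t (Sim u)) => //.
  have [y [lty Ey]] := @step u (exist _ t pt) (negbT Ht).
  have Ruy : R u y by exists Ep; split => //; apply: Ep_sim.
  have Hma := Nu 0 u (conj erefl (R_P Ruy)).
  case: Ey => _ Hm _; move: (Hm _ Hma); by rewrite (lty _ ta).
have hB : prov (Imp (Next chi) chi).
  apply: prov_imp_sem => t pt tn; apply/(chiP t pt) => u Nu.
  case Ht: (t (Sim u)) => //.
  have [y [lty Ey]] := @step u (exist _ t pt) (negbT Ht).
  have Ruy : R u y by exists Ep; split => //; apply: Ep_sim.
  have [u' [Su Ru']] := R_dyn Ruy (erefl (nxt y)).
  have Nu' : N u'.
    by move=> n v Hit; apply: (Nu n.+1); split; [exact: R_P Ruy|exists u'].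
  have := (chiP _ (svalP (nxt y))).1 (lty _ tn) u' Nu'.
  by move: (R_not Ru') => /negPf ->.
have [x Rwx] := P_R pw.
have xd : sval x (Dia a).
  by case: Rwx => [E [[Hsub _] Ewx]]; case: (Hsub _ _ Ewx) => _ /= ->.
have pt := svalP x.
have xchi : sval x chi := pt_pimp pt (r_diaInd hB) (pt_pimp pt (r_diaMon hA) xd).
have nN : ~ N w.
  by move=> Nw; move: (R_not Rwx); rewrite ((chiP _ pt).1 xchi w Nw).
have [n [v [Hit Hv]]] : exists n v, iterP n w v /\ ~ tminus (lI v) a.
  apply: NNPP => H; apply: nN => n v Hit; apply: NNPP => Hm; apply: H; by exists n, v.
have [pv Hs] := iterP_sub pw Hit.
exists n, (exist _ v pv); split => //=.
move: (I_ty v) => [_ [HS _]]; case: ((HS a).1 aSig) => //.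
Qed.

End Main.

Theorem corollary7p4
  (Sig : seq form) (W : finType) (leI SI : rel W) (lI : W -> ty) :
  subformula_closed Sig ->
  weak_quasimodel (fun f => f \in Sig) (fun x y => leI x y) (fun x y => SI x y) lI ->
  (forall (A : Type) (leA SA : A -> A -> Prop) (lA : A -> ty),
     weak_quasimodel (fun _ => true) leA SA lA -> deterministic SA ->
     let R := simulates (fun x y => leI x y) lI leA lA in
     [/\ simulation (fun x y => leI x y) lI leA lA R,
         dynamic (fun x y => SI x y) SA R
       & surjective_rel R]) ->
  quasimodel (fun f => f \in Sig)
    (W := {w : W | ~ prov (sim_formula Sig leI lI w)})
    (fun x y => leI (sval x) (sval y))
    (fun x y => SI (sval x) (sval y))
    (fun x => lI (sval x)).
Proof.
move=> Hsc HI HA.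
have HR := HA ct leC SC lC canon_wq canon_det.
simpl in HR.
have HI' := HI.
move: HI'; rewrite /weak_quasimodel /labelled_frame /partial_order.
move=> [[[Hrefl Htrans Hanti] Hty Hmon Himp] Hfc Hsens].
split; last first.
- exact: (WP_omega Hsc HI HR).
- exact: (WP_serial HI HR).
split; [split|..].
- split.
  + by move=> w.
  + by move=> u v w; apply: Htrans.
  + move=> [u pu] [v pv] /= H1 H2; have E := Hanti _ _ H1 H2; subst v.
    by f_equal; apply: proof_irrelevance.
- by move=> w; apply: Hty.
- by move=> w v; apply: Hmon.
- move=> [w pw] a b /= Hab; have [v [lwv [Ha Hb]]] := Himp _ _ _ Hab.
  by exists (exist _ v (P_up HI HR pw lwv)).
- move=> [w pw] [w' pw'] [v pv] /= lww' Swv.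
  have [v' [lvv' Sv']] := Hfc _ _ _ lww' Swv.
  by exists (exist _ v' (P_up HI HR pv lvv')).
- by move=> w v; apply: Hsens.
Qed.
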